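(* Let $G=(V_1,V_2,E)$ be a bipartite graph, let $\delta>0$, and let $W\subset V_2$ be chosen uniformly at random among all subsets of $V_2$. Then: (i) if $x,y\in V_1$ satisfy $|\mathrm{div}(x,y)|\ge\delta|V_2|$, then $\mathbb P\big(d^W(x)=d^W(y)\big)=O_\delta(|V_2|^{-0.5})$; (ii) if $\mathbf p_1=(x_1,y_1)$ and $\mathbf p_2=(x_2,y_2)$ are ordered pairs of vertices of $V_1$ with $|\mathrm{divb}(\mathbf p_1)\setminus N(x_2)|\ge\delta|V_2|$ and $|\mathrm{divb}(\mathbf p_1)\setminus N(y_2)|\ge\delta|V_2|$, then $\mathbb P\big(d^W_{\mathbf p_1}=d^W_{\mathbf p_2}\big)=O_\delta(|V_2|^{-0.5})$. Here $O_\delta(f)$ denotes a quantity bounded by $K_\delta f$ for a constant $K_\delta$ depending only on $\delta$.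
   Context: A bipartite graph $G=(V_1,V_2,E)$ has vertex set $V_1\sqcup V_2$ and edge set $E\subset V_1\times V_2$; $N(v)$ is the neighbourhood of $v$, and for $S\subset V_2$, $d^S(v)=|N(v)\cap S|$. For $u,v\in V_1$, $\mathrm{div}(u,v)=N(u)\triangle N(v)$ and $\mathrm{divb}(u,v)$ is the larger of $N(u)\setminus N(v)$, $N(v)\setminus N(u)$ (either if equal). Ordered pairs $\mathbf p=(u,v)$ of distinct vertices are written so that $\mathrm{divb}(\mathbf p)=N(u)\setminus N(v)$, and $d^S_{\mathbf p}:=d^S(u)-d^S(v)$. *)

(* Defs.v *)
From HB Require Import structures.
From mathcomp Require Import all_boot all_order all_algebra.
Set Implicit Arguments. Unset Strict Implicit. Unset Printing Implicit Defensive.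
Import Order.TTheory GRing.Theory Num.Theory.

(* A bipartite graph G = (V1, V2, E) is given by its neighbourhood map
   N : V1 -> {set V2} (N v = neighbours of v in V2). *)

Section Bip.
Variables (V1 V2 : finType) (N : V1 -> {set V2}).

Definition degIn (S : {set V2}) (v : V1) : nat := #|N v :&: S|.

Definition divs (u v : V1) : {set V2} := (N u :\: N v) :|: (N v :\: N u).

Definition divb (u v : V1) : {set V2} :=
  if #|N v :\: N u| <= #|N u :\: N v| then N u :\: N v else N v :\: N u.

Definition degPair (S : {set V2}) (u v : V1) : int :=
  (degIn S u)%:Z - (degIn S v)%:Z.

End Bip.

Definition probW (R : numFieldType) (V2 : finType) (P : pred {set V2}) : R :=
  (#|[set W : {set V2} | P W]|)%:R / (2 ^ #|V2|)%:R.

(* Main.v *)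
Require Import Defs.
From HB Require Import structures.
From mathcomp Require Import all_boot all_order all_algebra.
From mathcomp Require Import zify ring lra.
Import Order.TTheory GRing.Theory Num.Theory.

Lemma bin_mono m i j : i <= j -> j <= m./2 -> 'C(m, i) <= 'C(m, j).
Proof.
elim: j => [|j IH]; first by rewrite leqn0 => /eqP ->.
rewrite leq_eqVlt => /orP [/eqP -> //|]; rewrite ltnS => hij hj.
apply: leq_trans (IH hij (ltnW hj)) _.
have h := mul_bin_left m j.
have hmj : j.+1 <= m - j by move: hj; rewrite -[m in _ <= m - j](odd_double_half m); case: (odd m); lia.
have : j.+1 * 'C(m, j) <= j.+1 * 'C(m, j.+1) by rewrite h leq_mul2r hmj orbT.
by rewrite leq_mul2l.
Qed.

Lemma bin_max m k : 'C(m, k) <= 'C(m, m./2).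
Proof.
have [hk|hk] := leqP k m./2; first exact: bin_mono.
have [hkm|hkm] := leqP k m; last by rewrite bin_small.
rewrite -bin_sub //; apply: bin_mono => //.
move: hk; rewrite -[m in _ -> m - k <= _](odd_double_half m); case: (odd m); lia.
Qed.

Lemma bin_rec k : k.+1 * 'C(k.*2.+2, k.+1) = 2 * k.*2.+1 * 'C(k.*2, k).
Proof.
have h1 := mul_bin_diag k.*2.+2 k. simpl in h1.
have h2 := mul_bin_down k.*2.+1 k. simpl in h2.
have e : k.*2.+1 - k = k.+1 by lia.
rewrite e in h2.
rewrite -h1 -mulnA h2.
have -> : k.*2.+2 = 2 * k.+1 by lia.
by rewrite mulnA.
Qed.

Lemma central_even k : 'C(k.*2, k) ^ 2 * k.*2.+1 <= 16 ^ k.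
Proof.
elim: k => [|k IH]; first by [].
set b := 'C(k.*2, k) in IH *.
have hr := bin_rec k. rewrite -/b in hr.
set b' := 'C(k.*2.+2, k.+1) in hr.
have -> : (k.+1).*2 = k.*2.+2 by lia.
have : (k.+1)^2 * (b' ^ 2 * k.*2.+3) <= (k.+1)^2 * 16 ^ k.+1.
  have -> : (k.+1)^2 * (b' ^ 2 * k.*2.+3) = (k.+1 * b')^2 * k.*2.+3 by rewrite expnMn mulnA.
  rewrite hr expnS.
  have h3 : k.*2.+1 * k.*2.+3 <= k.*2.+2 * k.*2.+2 by nia.
  set P := 16 ^ k in IH *.
  have : 4 * b^2 * k.*2.+1 * (k.*2.+1 * k.*2.+3) <= 4 * b^2 * k.*2.+1 * (k.*2.+2 * k.*2.+2) by rewrite leq_mul2l h3 orbT.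
  have : 4 * (k.*2.+2 * k.*2.+2) * (b^2 * k.*2.+1) <= 4 * (k.*2.+2 * k.*2.+2) * P by rewrite leq_mul2l IH orbT.
  move=> H2 H1.
  have -> : (2 * k.*2.+1 * b) ^ 2 * k.*2.+3 = 4 * b ^ 2 * k.*2.+1 * (k.*2.+1 * k.*2.+3).
    rewrite !expnMn; ring.
  apply: leq_trans H1 _.
  rewrite [X in X <= _](_ : _ = 4 * (k.*2.+2 * k.*2.+2) * (b ^ 2 * k.*2.+1)); last by ring.
  apply: leq_trans H2 _.
  have -> : k.*2.+2 = 2 * k.+1 by lia.
  rewrite (_ : (k.+1)^2 = k.+1 * k.+1); last by ring.
  rewrite expnS -/P.
  rewrite (_ : 4 * (2 * k.+1 * (2 * k.+1)) * P = k.+1 * k.+1 * (16 * P)) //; ring.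
by rewrite leq_pmul2l // expn_gt0.
Qed.

Lemma central m : 'C(m, m./2) ^ 2 * m.+1 <= 4 ^ m.
Proof.
have hm := odd_double_half m.
set k := m./2 in hm *.
have e : 4 ^ k.*2 = 16 ^ k by rewrite -muln2 mulnC expnM.
case ho: (odd m) hm => /= hm; rewrite -hm; last first.
  by rewrite add0n e central_even.
rewrite add1n [4 ^ _]expnS e.
have h := central_even k.+1.
have h2 := mul_bin_diag k.*2.+2 k. simpl in h2.
have e2 : 'C(k.*2.+2, k.+1) = 2 * 'C(k.*2.+1, k).
  apply/eqP; rewrite -(eqn_pmul2l (ltn0Sn k)) -h2; apply/eqP.
  have -> : k.*2.+2 = 2 * k.+1 by lia. by rewrite mulnCA mulnA.
have e3 : (k.+1).*2 = k.*2.+2 by lia.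
rewrite e3 e2 [16 ^ _]expnS in h.
set c := 'C(k.*2.+1, k) in h *.
set P := 16 ^ k in h *.
have : 4 * (c^2 * k.*2.+2) <= 4 * (4 * P); last by rewrite leq_pmul2l.
rewrite expnMn (_ : 2^2 = 4) // in h.
set X := c ^ 2 in h *.
rewrite [in X in _ <= X]mulnA (_ : 4 * 4 = 16) //; apply: leq_trans h.
by rewrite mulnA leq_mul2l leqnSn orbT.
Qed.
Lemma count_bound (V : finType) (S : {set V}) (A : {set {set V}}) :
 (forall W1 W2, W1 \in A -> W2 \in A -> W1 :\: S = W2 :\: S -> #|W1 :&: S| = #|W2 :&: S|) ->
 #|A| <= 2 ^ #|~: S| * 'C(#|S|, #|S|./2).
Proof.
move=> hA.
rewrite -sum1_card (partition_big (fun W => W :\: S) (mem (powerset (~: S)))); last first.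
  by move=> W _; rewrite inE /= powersetE; apply/subsetP => v; rewrite !inE => /andP [].
rewrite -card_powerset -sum1_card big_distrl /=.
apply: leq_sum => T _; rewrite mul1n.
rewrite (eq_bigl (mem [set W in A | W :\: S == T])); last by move=> W; rewrite !inE.
rewrite sum1_card.
set B := [set W in A | W :\: S == T].
case: (set_0Vmem B) => [->|[W0 hW0]]; first by rewrite cards0.
have injB : {in B &, injective (fun W => W :&: S)}.
  move=> W1 W2; rewrite !inE => /andP [_ /eqP h1] /andP [_ /eqP h2] e.
  by rewrite -(setID W1 S) -(setID W2 S) e h1 h2.
rewrite -(card_in_imset injB).
apply: leq_trans (bin_max _ #|W0 :&: S|).
rewrite -cards_draws; apply: subset_leq_card; apply/subsetP => U /imsetP [W hW ->].
move: hW hW0; rewrite !inE => /andP [hWA /eqP hWT] /andP [hW0A /eqP hW0T].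
rewrite subsetIr /=; apply/eqP; apply: hA => //; by rewrite hWT hW0T.
Qed.
Local Open Scope ring_scope.

Lemma nat_part (n m c : nat) : (c * 2 ^ m <= 2 ^ n * 'C(m, m./2))%N ->
  (c ^ 2 * m.+1 <= (2 ^ n) ^ 2)%N.
Proof.
move=> h.
have h2 : (c ^ 2 * (2 ^ m) ^ 2 <= (2 ^ n) ^ 2 * 'C(m, m./2) ^ 2)%N.
  by rewrite -!expnMn leq_exp2r.
have hc := central m.
have : (c ^ 2 * m.+1 * (2 ^ m) ^ 2 <= (2 ^ n) ^ 2 * (2 ^ m) ^ 2)%N.
  rewrite mulnAC; apply: leq_trans (leq_mul h2 (leqnn m.+1)) _.
  rewrite -mulnA leq_mul2l; apply/orP; right.
  apply: (leq_trans hc); by rewrite -expnM mulnC expnM.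
by move=> H; rewrite -(@leq_pmul2r ((2 ^ m) ^ 2)) // expn_gt0 expn_gt0.
Qed.

Lemma final (R : rcfType) (d : R) (hd : 0 < d) (n m c : nat) :
  (c * 2 ^ m <= 2 ^ n * 'C(m, m./2))%N -> d * n%:R <= 2 * m%:R ->
  c%:R / (2 ^ n)%:R * Num.sqrt (n%:R) <= 1 + 2 / d.
Proof.
move=> h hn.
have hN := @nat_part n m c h.
set N : R := (2 ^ n)%:R.
have Npos : 0 < N by rewrite ltr0n expn_gt0.
have hN' : c%:R ^+ 2 * (m%:R + 1) <= N ^+ 2 :> R.
  by rewrite /N natr1 -!natrX -natrM ler_nat.
set x := c%:R / N * Num.sqrt n%:R.
have hs : Num.sqrt (n%:R : R) ^+ 2 = n%:R by rewrite sqr_sqrtr // ler0n.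
have hx2 : x ^+ 2 * d <= 2.
  rewrite /x !exprMn hs.
  have c0 : 0 <= c%:R ^+ 2 :> R by rewrite exprn_ge0 // ler0n.
  have m0 : 0 <= m%:R :> R by rewrite ler0n.
  have key : c%:R^+2 * n%:R * d <= 2 * N^+2 by nra.
  have hy : N^-1^+2 * N^+2 = 1 by rewrite -exprMn mulVf ?expr1n // gt_eqF.
  have y0 : 0 <= N^-1^+2 by rewrite exprn_ge0 // invr_ge0 ltW.
  nra.
have : x ^+ 2 <= 2 / d by rewrite ler_pdivlMr.
have : x <= 1 + x ^+ 2 by nra.
lra.
Qed.

Lemma degIn_split (V1 V2 : finType) (N : V1 -> {set V2}) (W S : {set V2}) u :
  degIn N W u = (#|N u :&: (W :\: S)| + #|N u :&: (W :&: S)|)%N.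
Proof.
rewrite /degIn -(cardsID S (N u :&: W)) addnC setIDA setIA //.
Qed.

Lemma inS_sub (V1 V2 : finType) (N : V1 -> {set V2}) (W S : {set V2}) u :
  S \subset N u -> #|N u :&: (W :&: S)| = #|W :&: S|.
Proof.
move=> hS; rewrite (setIidPr _) //; exact: subset_trans (subsetIr W S) hS.
Qed.

Lemma inS_dis (V1 V2 : finType) (N : V1 -> {set V2}) (W S : {set V2}) u :
  S :&: N u = set0 -> #|N u :&: (W :&: S)| = 0%N.
Proof.
move=> hS; apply/eqP; rewrite cards_eq0; apply/eqP/setP => v.
have := congr1 (fun X : {set V2} => v \in X) hS; rewrite !inE /=.
by case: (v \in S); case: (v \in N u); case: (v \in W).
Qed.

Lemma gen_bound (R : rcfType) (d : R) (hd : 0 < d) (V2 : finType) (S : {set V2})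
  (P : pred {set V2}) :
  (forall W1 W2, P W1 -> P W2 -> W1 :\: S = W2 :\: S -> #|W1 :&: S| = #|W2 :&: S|) ->
  d * (#|V2|)%:R <= 2 * (#|S|)%:R ->
  probW R P * Num.sqrt ((#|V2|)%:R) <= 1 + 2 / d.
Proof.
move=> hP hS; rewrite /probW; apply: (@final R d hd _ _ _ _ hS).
have hc := @count_bound V2 S [set W | P W].
have h : (#|[set W | P W]| <= 2 ^ #|~: S| * 'C(#|S|, #|S|./2))%N.
  apply: hc => W1 W2; rewrite !inE; exact: hP.
rewrite -(cardsC S) expnD mulnAC.
by rewrite mulnC -mulnA leq_mul2l mulnC h orbT.
Qed.

Lemma DI0 (V2 : finType) (X Y : {set V2}) : (X :\: Y) :&: Y = set0.
Proof. by apply/setP => v; rewrite !inE; case: (v \in Y); rewrite ?andbF. Qed.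

Lemma cond1 (V1 V2 : finType) (N : V1 -> {set V2}) u v W1 W2 :
  degIn N W1 u == degIn N W1 v -> degIn N W2 u == degIn N W2 v ->
  W1 :\: (N u :\: N v) = W2 :\: (N u :\: N v) ->
  #|W1 :&: (N u :\: N v)| = #|W2 :&: (N u :\: N v)|.
Proof.
set S := N u :\: N v => /eqP h1 /eqP h2 hT.
rewrite (@degIn_split _ _ N W1 S u) (@degIn_split _ _ N W1 S v) in h1.
rewrite (@degIn_split _ _ N W2 S u) (@degIn_split _ _ N W2 S v) in h2.
rewrite !(@inS_sub _ _ N _ S u) ?subsetDl // in h1 h2.
rewrite !(@inS_dis _ _ N _ S v) ?DI0 // in h1 h2.
rewrite hT in h1; lia.
Qed.

Lemma part1 (R : rcfType) (delta : R) (hdelta : 0 < delta)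
    (V1 V2 : finType) (N : V1 -> {set V2}) (x y : V1) :
        delta * (#|V2|)%:R <= (#|divs N x y|)%:R ->
        probW R (fun W : {set V2} => degIn N W x == degIn N W y)
          * Num.sqrt ((#|V2|)%:R) <= 1 + 2 / delta.
Proof.
move=> hd.
have hdiv : (#|divs N x y| <= #|N x :\: N y| + #|N y :\: N x|)%N.
  by rewrite /divs cardsU leq_subr.
case: (leqP #|N y :\: N x| #|N x :\: N y|) => hAB.
  apply: (@gen_bound R delta hdelta V2 (N x :\: N y)).
    move=> W1 W2; exact: cond1.
  have : (#|divs N x y| <= 2 * #|N x :\: N y|)%N by lia.
  rewrite -(ler_nat R) natrM => h; lra.
have -> : probW R (fun W : {set V2} => degIn N W x == degIn N W y) =
          probW R (fun W : {set V2} => degIn N W y == degIn N W x).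
  by rewrite /probW; congr (_%:R / _); apply: eq_card => W; rewrite !inE eq_sym.
apply: (@gen_bound R delta hdelta V2 (N y :\: N x)).
  move=> W1 W2; exact: cond1.
have : (#|divs N x y| <= 2 * #|N y :\: N x|)%N by lia.
rewrite -(ler_nat R) natrM => h; lra.
Qed.

Lemma cond2 (V1 V2 : finType) (N : V1 -> {set V2}) (S : {set V2}) x1 y1 x2 y2 W1 W2 :
  S \subset N x1 -> S :&: N y1 = set0 -> S :&: N x2 = set0 ->
  (S \subset N y2) \/ (S :&: N y2 = set0) ->
  degPair N W1 x1 y1 == degPair N W1 x2 y2 -> degPair N W2 x1 y1 == degPair N W2 x2 y2 ->
  W1 :\: S = W2 :\: S -> #|W1 :&: S| = #|W2 :&: S|.
Proof.
move=> s1 s2 s3 s4 /eqP h1 /eqP h2 hT; move: h1 h2; rewrite /degPair.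
rewrite (@degIn_split _ _ N W1 S x1) (@degIn_split _ _ N W1 S y1).
rewrite (@degIn_split _ _ N W1 S x2) (@degIn_split _ _ N W1 S y2).
rewrite (@degIn_split _ _ N W2 S x1) (@degIn_split _ _ N W2 S y1).
rewrite (@degIn_split _ _ N W2 S x2) (@degIn_split _ _ N W2 S y2).
rewrite !(@inS_sub _ _ N _ S x1) // !(@inS_dis _ _ N _ S y1) // !(@inS_dis _ _ N _ S x2) // hT.
case: s4 => s4.
  rewrite !(@inS_sub _ _ N _ S y2) //; lia.
rewrite !(@inS_dis _ _ N _ S y2) //; lia.
Qed.

Lemma part2 (R : rcfType) (delta : R) (hdelta : 0 < delta)
    (V1 V2 : finType) (N : V1 -> {set V2}) (x1 y1 x2 y2 : V1) :
        divb N x1 y1 = N x1 :\: N y1 ->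
        delta * (#|V2|)%:R <= (#|divb N x1 y1 :\: N x2|)%:R ->
        probW R (fun W : {set V2} => degPair N W x1 y1 == degPair N W x2 y2)
          * Num.sqrt ((#|V2|)%:R) <= 1 + 2 / delta.
Proof.
move=> -> hd.
set E := N x1 :\: N y1 :\: N x2 in hd.
have hE := cardsID (N y2) E.
have sE1 : E \subset N x1.
  by apply/subsetP => v; rewrite !inE; case: (v \in N x1); rewrite ?andbF.
have sE2 : E :&: N y1 = set0.
  by apply/setP => v; rewrite !inE; case: (v \in N y1); rewrite ?andbF.
have sE3 : E :&: N x2 = set0.
  by apply/setP => v; rewrite !inE; case: (v \in N x2); rewrite ?andbF.
case: (leqP #|E :\: N y2| #|E :&: N y2|) => hAB.
  apply: (@gen_bound R delta hdelta V2 (E :&: N y2)).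
    move=> W1 W2; apply: cond2.
    - exact: subset_trans (subsetIl _ _) sE1.
    - by rewrite setIAC sE2 set0I.
    - by rewrite setIAC sE3 set0I.
    - by left; exact: subsetIr.
  have : (#|E| <= 2 * #|E :&: N y2|)%N by lia.
  rewrite -(ler_nat R) natrM => h; lra.
apply: (@gen_bound R delta hdelta V2 (E :\: N y2)).
  move=> W1 W2; apply: cond2.
  - exact: subset_trans (subsetDl _ _) sE1.
  - by apply/setP => v; move: (congr1 (fun X : {set V2} => v \in X) sE2); rewrite !inE /=; case: (v \in N y1); rewrite ?andbF.
  - by apply/setP => v; move: (congr1 (fun X : {set V2} => v \in X) sE3); rewrite !inE /=; case: (v \in N x2); rewrite ?andbF.
  - by right; exact: DI0.
have : (#|E| <= 2 * #|E :\: N y2|)%N by lia.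
rewrite -(ler_nat R) natrM => h; lra.
Qed.

Theorem lemma3p2 (R : rcfType) (delta : R) (hdelta : 0 < delta) :
  exists K : R,
    (forall (V1 V2 : finType) (N : V1 -> {set V2}) (x y : V1),
        delta * (#|V2|)%:R <= (#|divs N x y|)%:R ->
        probW R (fun W : {set V2} => degIn N W x == degIn N W y)
          * Num.sqrt ((#|V2|)%:R) <= K)
    /\
    (forall (V1 V2 : finType) (N : V1 -> {set V2}) (x1 y1 x2 y2 : V1),
        x1 != y1 -> x2 != y2 ->
        divb N x1 y1 = N x1 :\: N y1 ->
        divb N x2 y2 = N x2 :\: N y2 ->
        delta * (#|V2|)%:R <= (#|divb N x1 y1 :\: N x2|)%:R ->
        delta * (#|V2|)%:R <= (#|divb N x1 y1 :\: N y2|)%:R ->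
        probW R (fun W : {set V2} => degPair N W x1 y1 == degPair N W x2 y2)
          * Num.sqrt ((#|V2|)%:R) <= K).
Proof.
exists (1 + 2 / delta); split.
  by move=> V1 V2 N x y; exact: part1.
move=> V1 V2 N x1 y1 x2 y2 _ _ h1 _ hd _; exact: part2.
Qed.
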